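(* Let $k\ge 2$, $D=\{0,1,\dots,k\}$, let $f:D^n\to\mathbb{R}$ be a $k$-submodular function, let $P\subseteq D^n$ be the set of points minimising $f$, and let $P_{\mathrm{int}}=P\cap\{1,\dots,k\}^n$. Then $P_{\mathrm{int}}$ can be described as the set of solutions in $\{1,\dots,k\}^n$ of a conjunction of arbitrary unary constraints and constraints of the forms $(x=a\lor y=b)$ with $a,b\in\{1,\dots,k\}$ and $(x=\pi(y))$ with $\pi$ a permutation of $\{1,\dots,k\}$.
   Context: With $\sqcap,\sqcup$ on $\{0,\dots,k\}$ given by $0\sqcap x=0$, $0\sqcup x=x$, $x\sqcap x=x\sqcup x=x$ and $x\sqcap y=x\sqcup y=0$ for distinct nonzero $x,y$, a function $f$ on $D^n$ is $k$-submodular if $f(X)+f(Y)\ge f(X\sqcap Y)+f(X\sqcup Y)$ for all $X,Y\in D^n$, with operations applied coordinatewise. *)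

(* Defs.v *)
From HB Require Import structures.
From mathcomp Require Import all_boot all_order all_fingroup all_algebra.
Set Implicit Arguments. Unset Strict Implicit. Unset Printing Implicit Defensive.
Import Order.TTheory GRing.Theory Num.Theory.

(* The domain D = {0,1,...,k} is 'I_k.+1; points of D^n are {ffun 'I_n -> 'I_k.+1}. *)

Definition kmeet (k : nat) (x y : 'I_k.+1) : 'I_k.+1 :=
  if x == y then x else ord0.

Definition kjoin (k : nat) (x y : 'I_k.+1) : 'I_k.+1 :=
  if x == ord0 then y else if y == ord0 then x else if x == y then x else ord0.

Definition vmeet (n k : nat) (X Y : {ffun 'I_n -> 'I_k.+1}) : {ffun 'I_n -> 'I_k.+1} :=
  [ffun i => kmeet (X i) (Y i)].

Definition vjoin (n k : nat) (X Y : {ffun 'I_n -> 'I_k.+1}) : {ffun 'I_n -> 'I_k.+1} :=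
  [ffun i => kjoin (X i) (Y i)].

Local Open Scope ring_scope.

Definition k_submodular (R : realFieldType) (n k : nat)
  (f : {ffun 'I_n -> 'I_k.+1} -> R) : Prop :=
  forall X Y, f (vmeet X Y) + f (vjoin X Y) <= f X + f Y.

Definition is_minimiser (R : realFieldType) (n k : nat)
  (f : {ffun 'I_n -> 'I_k.+1} -> R) (X : {ffun 'I_n -> 'I_k.+1}) : Prop :=
  forall Y, f X <= f Y.

Local Close Scope ring_scope.

Definition is_int (n k : nat) (X : {ffun 'I_n -> 'I_k.+1}) : bool :=
  [forall i, X i != ord0].

Inductive kconstr (n k : nat) : Type :=
| CUnary of 'I_n & {set 'I_k.+1}                  (* x_i \in S *)
| CDisj  of 'I_n & 'I_n & 'I_k.+1 & 'I_k.+1       (* x_i = a \/ x_j = b *)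
| CPerm  of 'I_n & 'I_n & {perm 'I_k.+1}.         (* x_i = pi (x_j) *)

(* well-formedness: a, b in {1..k}; pi fixes 0, so it restricts to a
   permutation of {1..k} (and every permutation of {1..k} arises this way) *)
Definition kconstr_wf (n k : nat) (c : kconstr n k) : bool :=
  match c with
  | CUnary _ _ => true
  | CDisj _ _ a b => (a != ord0) && (b != ord0)
  | CPerm _ _ pi => pi ord0 == ord0
  end.

Definition kconstr_sat (n k : nat) (c : kconstr n k) (X : {ffun 'I_n -> 'I_k.+1}) : bool :=
  match c with
  | CUnary i A => X i \in A
  | CDisj i j a b => (X i == a) || (X j == b)
  | CPerm i j pi => X i == pi (X j)
  end.

(* Main.v *)
Require Import Defs.
From HB Require Import structures.
From mathcomp Require Import all_boot all_order all_fingroup all_algebra.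
From mathcomp Require Import lra.
Set Implicit Arguments. Unset Strict Implicit. Unset Printing Implicit Defensive.
Import Order.TTheory GRing.Theory Num.Theory.
Definition dd (T : eqType) (x y z : T) := if x == y then x else z.

Lemma dd_maj (T : eqType) (x y z w : T) :
  (x = w /\ y = w) \/ (z = w /\ (x = w \/ y = w)) -> dd x y z = w.
Proof.
rewrite /dd; case: eqP => [e|ne]; case=> [[h1 h2]|[h3 [h1|h2]]] //.
- by rewrite e.
- by move: ne; rewrite h1 h2.
Qed.

Definition dclosed (T : eqType) (B : T -> T -> bool) :=
  forall p1 q1 r1 p2 q2 r2, B p1 p2 -> B q1 q2 -> B r1 r2 ->
    B (dd p1 q1 r1) (dd p2 q2 r2).

Lemma N1 (T : eqType) (B : T -> T -> bool) (hB : dclosed B) c d d' x y :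
  B c d -> B c d' -> d != d' -> B x y -> B c y.
Proof.
move=> h1 h2 ne h3; have := hB _ _ _ _ _ _ h1 h2 h3.
by rewrite /dd eqxx (negbTE ne).
Qed.

Lemma func_part (T : eqType) (B : T -> T -> bool) (hB : dclosed B)
  a b a' b' u0 v0 :
  B a b' -> B a' b -> a' != a ->
  (forall u, B u b -> u = a') -> B u0 v0 -> u0 != a' -> v0 != b' ->
  forall c d d', B c d -> B c d' -> d = d'.
Proof.
move=> hab' ha'b na hMb h0 nu nv c d d' h1 h2; apply/eqP/negPn/negP => ne.
have hcb := N1 hB h1 h2 ne ha'b.
have ec := hMb _ hcb; subst c.
have ha'b' := N1 hB h1 h2 ne hab'.
have hu0b' : B u0 b'.
  by have := hB _ _ _ _ _ _ ha'b' hab' h0; rewrite /dd (negbTE na) eqxx.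
have nv' : b' != v0 by rewrite eq_sym.
have := hMb _ (N1 hB hu0b' h0 nv' ha'b) => e; by rewrite e eqxx in nu.
Qed.

Lemma dclosedT (T : eqType) (B : T -> T -> bool) :
  dclosed B -> dclosed (fun u v => B v u).
Proof. by move=> hB p1 q1 r1 p2 q2 r2 h1 h2 h3; apply: hB. Qed.

Lemma rel_main (T : finType) (B : T -> T -> bool) (hB : dclosed B) a b a' b' :
  B a b' -> B a' b -> ~~ B a b ->
  (a' != a /\ b' != b /\ forall u v, B u v -> (u == a') || (v == b')) \/
  (a' != a /\ (forall u v v', B u v -> B u v' -> v = v') /\
                (forall u u' v, B u v -> B u' v -> u = u')).
Proof.
move=> hab' ha'b nab.
have na : a' != a by apply: contraNneq nab => <-.
have nb : b' != b by apply: contraNneq nab => <-.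
have hNa : forall v, B a v -> v = b'.
  move=> v hv; apply/eqP/negPn/negP => ne.
  by move: nab; rewrite (N1 hB hv hab' ne ha'b).
have hMb : forall u, B u b -> u = a'.
  move=> u hu; apply/eqP/negPn/negP => ne.
  have hT := dclosedT hB.
  by move: nab; rewrite (N1 hT hu ha'b ne hab').
case: (boolP [forall u, forall v, B u v ==> (u == a') || (v == b')]) => [/forallP H|].
  left; do 2!split => //; move=> u v huv; by have /forallP/(_ v)/implyP := H u; apply.
rewrite negb_forall => /existsP [u0]; rewrite negb_forall => /existsP [v0].
rewrite negb_imply negb_or => /andP [h0 /andP [nu nv]].
right; split => //; split.
  exact: (func_part hB hab' ha'b na hMb h0 nu nv).
move=> u u' v h1 h2.
have hT := dclosedT hB.
have nb' : b' != b := nb.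
apply: (func_part hT (a:=b) (b:=a) (a':=b') (b':=a') (u0:=v0) (v0:=u0)) => //.
- exact: h1.
- exact: h2.
Qed.
Lemma perm_ext (T : finType) (z : T) (s : seq (T * T)) :
  uniq s -> (forall p q, p \in s -> q \in s -> (p.1 == q.1) = (p.2 == q.2)) ->
  (forall p, p \in s -> (p.1 != z) && (p.2 != z)) ->
  exists pi : {perm T}, pi z = z /\ forall p, p \in s -> pi p.1 = p.2.
Proof.
elim: s => [|[v u] s IH] /=.
  by move=> _ _ _; exists 1%g; split => //; rewrite perm1.
move=> /andP [ns us] hpq hz.
have [pi [pz hpi]] : exists pi : {perm T}, pi z = z /\ forall p, p \in s -> pi p.1 = p.2.
  apply: IH => // [p q hp hq|p hp]; first by apply: hpq; rewrite inE ?hp ?hq orbT.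
  by apply: hz; rewrite inE hp orbT.
have /andP [vz uz] := hz (v, u) (mem_head _ _).
have pvz : pi v != z by rewrite -pz (inj_eq perm_inj).
exists (pi * tperm (pi v) u)%g; split.
  by rewrite permM pz tpermD // eq_sym.
move=> p; rewrite inE => /orP [/eqP -> | hp]; first by rewrite permM /= tpermL.
rewrite permM hpi //.
have e := hpq (v, u) p (mem_head _ _) (@mem_behead _ ((v,u)::s) p hp).
have nv : v != p.1.
  apply/negP => /eqP ev; move: (e); rewrite /= ev eqxx => /esym/eqP eu.
  by move: ns; rewrite ev eu -surjective_pairing hp.
have nu : u != p.2 by move: e; rewrite /= (negbTE nv) => <-.
rewrite tpermD //; last by rewrite -(hpi p hp) (inj_eq perm_inj).
Qed.
Lemma dd_coord k (x y z : 'I_k.+1) : x != ord0 -> y != ord0 -> z != ord0 ->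
  dd x y z = kjoin (kjoin (kmeet x y) z) (kmeet x y).
Proof.
move=> hx hy hz; rewrite /dd /kjoin /kmeet.
have [e|nxy] := eqVneq x y.
  subst y; rewrite (negbTE hx) (negbTE hz).
  have [e|nxz] := eqVneq x z; first by subst z; rewrite eqxx (negbTE hx).
  by rewrite eqxx.
rewrite eqxx (negbTE hz).
have [e|nz] := eqVneq z ord0; first by rewrite e eqxx in hz.
by [].
Qed.

Definition minb (R : realFieldType) n k (f : {ffun 'I_n -> 'I_k.+1} -> R) X :=
  [forall Y, (f X <= f Y)%R].

Lemma minbP (R : realFieldType) n k (f : {ffun 'I_n -> 'I_k.+1} -> R) X :
  reflect (is_minimiser f X) (minb f X).
Proof. exact: (iffP forallP). Qed.

Lemma min_closed (R : realFieldType) n k (f : {ffun 'I_n -> 'I_k.+1} -> R)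
  (hf : k_submodular f) X Y :
  is_minimiser f X -> is_minimiser f Y ->
  is_minimiser f (vmeet X Y) /\ is_minimiser f (vjoin X Y).
Proof.
move=> hX hY; have h := hf X Y.
have h1 := hX (vmeet X Y); have h2 := hY (vjoin X Y).
split=> W; have h3 := hX W; have h4 := hY (vmeet X Y); have h5 := hX (vjoin X Y); lra.
Qed.

Definition ddv n k (X Y Z : {ffun 'I_n -> 'I_k.+1}) : {ffun 'I_n -> 'I_k.+1} :=
  [ffun i => dd (X i) (Y i) (Z i)].

Lemma ddv_min (R : realFieldType) n k (f : {ffun 'I_n -> 'I_k.+1} -> R)
  (hf : k_submodular f) X Y Z :
  is_minimiser f X -> is_minimiser f Y -> is_minimiser f Z ->
  is_int X -> is_int Y -> is_int Z ->
  is_minimiser f (ddv X Y Z) /\ is_int (ddv X Y Z).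
Proof.
move=> hX hY hZ /forallP iX /forallP iY /forallP iZ.
have -> : ddv X Y Z = vjoin (vjoin (vmeet X Y) Z) (vmeet X Y).
  by apply/ffunP => i; rewrite !ffunE dd_coord // !ffunE.
have [hM _] := min_closed hf hX hY.
have [_ hN] := min_closed hf hM hZ.
have [_ hD] := min_closed hf hN hM.
split => //.
have <- : ddv X Y Z = vjoin (vjoin (vmeet X Y) Z) (vmeet X Y).
  by apply/ffunP => i; rewrite !ffunE dd_coord // !ffunE.
apply/forallP => i; rewrite ffunE /dd; case: ifP => _; [exact: iX | exact: iZ].
Qed.

Definition allcs n k : seq (kconstr n k) :=
 [seq CUnary p.1 p.2 | p <- enum {: 'I_n * {set 'I_k.+1}}] ++
 [seq CDisj p.1.1 p.1.2 p.2.1 p.2.2 | p <- enum {: ('I_n * 'I_n) * ('I_k.+1 * 'I_k.+1)}] ++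
 [seq CPerm p.1.1 p.1.2 p.2 | p <- enum {: ('I_n * 'I_n) * {perm 'I_k.+1}}].

Theorem lemma4 (R : realFieldType) (k n : nat) (hk : (2 <= k)%N)
  (f : {ffun 'I_n -> 'I_k.+1} -> R) (hf : k_submodular f) :
  exists cs : seq (kconstr n k),
    all (@kconstr_wf n k) cs /\
    forall X : {ffun 'I_n -> 'I_k.+1},
      is_int X ->
      (is_minimiser f X <-> all (fun c => kconstr_sat c X) cs).
Proof.
pose S Y := minb f Y && is_int Y.
pose valid (c : kconstr n k) := [forall Y, S Y ==> kconstr_sat c Y].
exists [seq c <- allcs n k | kconstr_wf c && valid c].
split.
  rewrite all_filter; elim: (allcs n k) => //= c s ->; rewrite andbT.
  by apply/implyP => /andP [].
move=> X hX; split.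
  move=> hmin; rewrite all_filter; elim: (allcs n k) => //= c s ->; rewrite andbT.
  apply/implyP; case/andP => _ /forallP /(_ X) /implyP; apply.
  by rewrite /S hX andbT; apply/minbP.
rewrite all_filter /allcs !all_cat !all_map => /and3P [hU hD hP].
have me : forall (T : finType) (x : T), x \in Finite.enum T.
  by move=> T x; rewrite -enumT mem_enum.
have hU' : forall i A, valid (CUnary i A) -> X i \in A.
  move=> i A hv; move/allP: hU => /(_ (i, A) (me _ _)) /=.
  by rewrite hv => /implyP; apply.
have hD' : forall i j a b, a != ord0 -> b != ord0 -> valid (CDisj i j a b) ->
    (X i == a) || (X j == b).
  move=> i j a b ha hb hv; move/allP: hD => /(_ ((i, j), (a, b)) (me _ _)) /=.
  by rewrite hv ha hb => /implyP; apply.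
have hP' : forall (i j : 'I_n) (pi : {perm 'I_k.+1}), pi ord0 = ord0 -> valid (CPerm i j pi) -> X i == pi (X j).
  move=> i j pi hpi hv; move/allP: hP => /(_ ((i, j), pi) (me _ _)) /=.
  by rewrite hv hpi eqxx => /implyP; apply.
have hS3 : forall Y1 Y2 Y3, S Y1 -> S Y2 -> S Y3 -> S (ddv Y1 Y2 Y3).
  move=> Y1 Y2 Y3 /andP [/minbP m1 i1] /andP [/minbP m2 i2] /andP [/minbP m3 i3].
  have [m i] := ddv_min hf m1 m2 m3 i1 i2 i3.
  by rewrite /S i andbT; apply/minbP.
have Snz : forall Y i, S Y -> Y i != ord0.
  by move=> Y i /andP [_ /forallP]; apply.
have pair : forall i j, exists Y, S Y && (Y i == X i) && (Y j == X j).
  move=> i j.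
  pose B u v := [exists Y, S Y && (Y i == u) && (Y j == v)].
  have hB : dclosed B.
    move=> p1 q1 r1 p2 q2 r2.
    move=> /existsP [Y1 /andP [/andP [s1 /eqP e1] /eqP e1']].
    move=> /existsP [Y2 /andP [/andP [s2 /eqP e2] /eqP e2']].
    move=> /existsP [Y3 /andP [/andP [s3 /eqP e3] /eqP e3']].
    apply/existsP; exists (ddv Y1 Y2 Y3); rewrite hS3 //= !ffunE.
    by rewrite e1 e2 e3 e1' e2' e3' !eqxx.
  have Bnz : forall u v, B u v -> (u != ord0) && (v != ord0).
    move=> u v /existsP [Y /andP [/andP [s /eqP <-] /eqP <-]].
    by rewrite !Snz.
  have hY1 : exists Y1, S Y1 && (Y1 i == X i).
    have H : valid (CUnary i [set u | [exists Y, S Y && (Y i == u)]]).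
      apply/forallP => Y; apply/implyP => sY /=; rewrite inE.
      by apply/existsP; exists Y; rewrite sY eqxx.
    by move/hU': H; rewrite inE => /existsP [Y hY]; exists Y.
  have hY2 : exists Y2, S Y2 && (Y2 j == X j).
    have H : valid (CUnary j [set u | [exists Y, S Y && (Y j == u)]]).
      apply/forallP => Y; apply/implyP => sY /=; rewrite inE.
      by apply/existsP; exists Y; rewrite sY eqxx.
    by move/hU': H; rewrite inE => /existsP [Y hY]; exists Y.
  case: hY1 => Y1 /andP [s1 /eqP e1]; case: hY2 => Y2 /andP [s2 /eqP e2].
  have hab' : B (X i) (Y1 j) by apply/existsP; exists Y1; rewrite s1 e1 !eqxx.
  have ha'b : B (Y2 i) (X j) by apply/existsP; exists Y2; rewrite s2 e2 !eqxx.
  case: (boolP (B (X i) (X j))) => [/existsP [Y hY] | nab]; first by exists Y.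
  exfalso.
  case: (rel_main hB hab' ha'b nab) => [[na [nb hall]] | [na [hfun hinj]]].
    have := hD' i j (Y2 i) (Y1 j) (Snz _ _ s2) (Snz _ _ s1).
    rewrite eq_sym (negbTE na) eq_sym (negbTE nb) /= => H.
    suff hv : valid (CDisj i j (Y2 i) (Y1 j)) by move: (H hv).
    apply/forallP => Y; apply/implyP => sY /=; apply: hall.
    by apply/existsP; exists Y; rewrite sY !eqxx.
  pose s := [seq p <- enum {: 'I_k.+1 * 'I_k.+1} | B p.2 p.1].
  have [pi [pz hpi]] : exists pi : {perm 'I_k.+1}, pi ord0 = ord0 /\
      forall p, p \in s -> pi p.1 = p.2.
    apply: perm_ext.
    - by rewrite filter_uniq // enum_uniq.
    - move=> p q; rewrite !mem_filter => /andP [hp _] /andP [hq _].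
      apply/eqP/eqP => [e|e].
        by apply: (hinj _ _ p.1) => //; rewrite e.
      by apply: (hfun p.2) => //; rewrite e.
    - by move=> p; rewrite mem_filter => /andP [/Bnz /andP [h1 h2] _]; rewrite h1 h2.
  have := hP' i j pi pz.
  have -> : pi (X j) = Y2 i.
    by have := hpi (X j, Y2 i); rewrite mem_filter mem_enum ha'b; apply.
  rewrite eq_sym (negbTE na) => H.
  suff hv : valid (CPerm i j pi) by move: (H hv).
  apply/forallP => Y; apply/implyP => sY /=.
  have := hpi (Y j, Y i); rewrite mem_filter mem_enum /= andbT => ->; first by [].
  by apply/existsP; exists Y; rewrite sY !eqxx.
have hseq : forall m (s : seq 'I_n), (size s < m)%N ->
    exists Y, S Y && all (fun j => Y j == X j) s.
  elim=> [|m IH] // s0 hs.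
  case: s0 hs => [|i1 [|i2 [|i3 r]]] hs.
  - case: (pickP (fun _ : 'I_n => true)) => [i _ | none].
      have [Y /andP [/andP [sY _] _]] := pair i i.
      by exists Y; rewrite sY.
    case: (@arg_minP _ R _ X xpredT f isT) => Y _ hY.
    exists Y; rewrite /= andbT; apply/andP; split.
      by apply/forallP => Z; apply: hY.
    by apply/forallP => i; have := none i.
  - have [Y /andP [/andP [sY e] _]] := pair i1 i1.
    by exists Y; rewrite /= sY e.
  - have [Y /andP [/andP [sY e1] e2]] := pair i1 i2.
    by exists Y; rewrite /= sY e1 e2.
  - have [Y1 /andP [s1 /allP a1]] := IH (i2 :: i3 :: r) hs.
    have [Y2 /andP [s2 /allP a2]] := IH (i1 :: i3 :: r) hs.
    have [Y3 /andP [s3 /allP a3]] := IH (i1 :: i2 :: r) hs.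
    exists (ddv Y1 Y2 Y3); rewrite hS3 //.
    apply/allP => j hj; rewrite ffunE; apply/eqP/dd_maj.
    move: hj; rewrite !inE => /orP [/eqP ->|/orP [/eqP ->|/orP [/eqP ->|hr]]].
    + right; split; first by apply/eqP/a3; rewrite !inE eqxx.
      by right; apply/eqP/a2; rewrite !inE eqxx.
    + right; split; first by apply/eqP/a3; rewrite !inE eqxx orbT.
      by left; apply/eqP/a1; rewrite !inE eqxx.
    + by left; split; [apply/eqP/a1|apply/eqP/a2]; rewrite !inE eqxx ?orbT.
    + by left; split; [apply/eqP/a1|apply/eqP/a2]; rewrite !inE hr !orbT.
have [Y /andP [sY hY]] := hseq _ (enum 'I_n) (ltnSn _).
have -> : X = Y.
  by apply/ffunP => j; apply/esym/eqP; move/allP: hY; apply; rewrite mem_enum.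
by case/andP: sY => /minbP.
Qed.
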